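(* Let $L\subseteq Q$ be an extension of Lie algebras with $L$ semiprime, and suppose $Q$ is an algebra of quotients of $L$. Then $A(Q)$ is a left quotient algebra of $A_0$.
   Context: Algebras are over a commutative unital ring $\Phi$. For a Lie algebra $Q$, $\mathrm{ad}_x(y)=[x,y]$ and $A(Q)$ is the associative subalgebra of $\mathrm{End}_\Phi(Q)$ generated by all $\mathrm{ad}_x$, $x\in Q$. For a Lie subalgebra $L\subseteq Q$, $A_0=\{\mu\in A(Q):\mu(L)\subseteq L\}$. $\mathrm{Ann}_L(X)=\{a\in L:[a,X]=0\}$. $L$ is semiprime if $[I,I]\ne0$ for every nonzero ideal $I$ of $L$. $Q$ is an algebra of quotients of $L$ if for every nonzero $q\in Q$ there is an ideal $I$ of $L$ with $\mathrm{Ann}_L(I)=0$ and $0\neq[I,q]\subseteq L$. An associative algebra $S$ is a left quotient algebra of a subalgebra $A$ if for all $p,q\in S$ with $p\ne0$ there exists $x\in A$ with $xp\neq0$ and $xq\in A$. *)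

(* Defs.v *)
From HB Require Import structures.
From mathcomp Require Import all_boot all_order all_algebra.
Set Implicit Arguments. Unset Strict Implicit. Unset Printing Implicit Defensive.
Import GRing.Theory.
Local Open Scope ring_scope.

Section Lie.
Variables (R : comPzRingType) (Q : lmodType R).

Definition is_lie_bracket (br : Q -> Q -> Q) : Prop :=
  [/\ (forall (a : R) (x y z : Q), br (a *: x + y) z = a *: br x z + br y z),
      (forall (a : R) (x y z : Q), br z (a *: x + y) = a *: br z x + br z y),
      (forall x : Q, br x x = 0) &
      (forall x y z : Q, br x (br y z) + br y (br z x) + br z (br x y) = 0)].

Variable br : Q -> Q -> Q.

Definition ad (x : Q) : Q -> Q := fun y => br x y.

Definition submodule (L : Q -> Prop) : Prop :=
  [/\ L 0, (forall x y, L x -> L y -> L (x + y)) &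
      (forall (a : R) x, L x -> L (a *: x))].

Definition lie_subalgebra (L : Q -> Prop) : Prop :=
  submodule L /\ (forall x y, L x -> L y -> L (br x y)).

Definition lie_ideal (L I : Q -> Prop) : Prop :=
  [/\ submodule I, (forall x, I x -> L x) &
      (forall x y, L x -> I y -> I (br x y))].

Definition trivial_ann (L I : Q -> Prop) : Prop :=
  forall a, L a -> (forall b, I b -> br a b = 0) -> a = 0.

Definition semiprime (L : Q -> Prop) : Prop :=
  forall I, lie_ideal L I -> (exists x, I x /\ x <> 0) ->
    exists a b, [/\ I a, I b & br a b <> 0].

Definition algebra_of_quotients (L : Q -> Prop) : Prop :=
  forall q : Q, q <> 0 ->
    exists I, [/\ lie_ideal L I, trivial_ann L I,
                  (exists a, I a /\ br a q <> 0) &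
                  (forall a, I a -> L (br a q))].

(* A(Q): the associative subalgebra of End_R(Q) generated by the ad_x
   (non-unital; elements represented as functions Q -> Q). *)
Inductive inA : (Q -> Q) -> Prop :=
| inA_ad x : inA (ad x)
| inA_add f g : inA f -> inA g -> inA (fun q => f q + g q)
| inA_scale (a : R) f : inA f -> inA (fun q => a *: f q)
| inA_comp f g : inA f -> inA g -> inA (fun q => f (g q)).

Definition inA0 (L : Q -> Prop) (mu : Q -> Q) : Prop :=
  inA mu /\ (forall x, L x -> L (mu x)).

End Lie.

(* S is a left quotient algebra of its subalgebra A (inside End(Q),
   product = composition, zero = zero map). *)
Definition left_quotient_algebra (R : comPzRingType) (Q : lmodType R)
  (S A : (Q -> Q) -> Prop) : Prop :=
  forall p q, S p -> S q -> p <> (fun _ => 0) ->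
    exists x, [/\ A x, (fun y => x (p y)) <> (fun _ => 0) &
                   A (fun y => x (q y))].

(* Main.v *)
Require Import Defs.
From mathcomp Require Import all_boot all_order all_algebra.
From Stdlib Require Import Classical FunctionalExtensionality.
Set Implicit Arguments. Unset Strict Implicit. Unset Printing Implicit Defensive.
Import GRing.Theory.
Local Open Scope ring_scope.

Section Proof.
Variables (R : comPzRingType) (Q : lmodType R) (br : Q -> Q -> Q) (L : Q -> Prop).
Hypothesis Hbr : is_lie_bracket br.
Hypothesis HL : lie_subalgebra br L.

Lemma brDl x y z : br (x + y) z = br x z + br y z.
Proof. case: Hbr => H _ _ _. by have := H 1 x y z; rewrite !scale1r. Qed.
Lemma brDr x y z : br z (x + y) = br z x + br z y.
Proof. case: Hbr => _ H _ _. by have := H 1 x y z; rewrite !scale1r. Qed.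
Lemma brZl a x z : br (a *: x) z = a *: br x z.
Proof. case: Hbr => H _ _ _. have H0 : br 0 z = 0.
  by have := H (-1) z z z; rewrite !scaleN1r !addNr.
by have := H a x 0 z; rewrite addr0 H0 addr0. Qed.
Lemma br0l z : br 0 z = 0.
Proof. case: Hbr => H _ _ _. by have := H (-1) z z z; rewrite !scaleN1r !addNr. Qed.
Lemma brZr a x z : br z (a *: x) = a *: br z x.
Proof. case: Hbr => _ H _ _. have H0 : br z 0 = 0.
  by have := H (-1) z z z; rewrite !scaleN1r !addNr.
by have := H a x 0 z; rewrite addr0 H0 addr0. Qed.
Lemma br0r z : br z 0 = 0.
Proof. case: Hbr => _ H _ _. by have := H (-1) z z z; rewrite !scaleN1r !addNr. Qed.
Lemma brNl x z : br (- x) z = - br x z.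
Proof. by rewrite -scaleN1r brZl scaleN1r. Qed.
Lemma brNr x z : br z (- x) = - br z x.
Proof. by rewrite -scaleN1r brZr scaleN1r. Qed.
Lemma brA x y : br x y = - br y x.
Proof. case: Hbr => _ _ H _. have := H (x + y).
rewrite brDl !brDr !H add0r addr0 => /eqP; rewrite addr_eq0 => /eqP //. Qed.
Lemma brJ a y v : br a (br y v) = br (br a y) v + br y (br a v).
Proof. case: Hbr => _ _ _ H. have := H a y v => /eqP.
rewrite -addrA addr_eq0 => /eqP ->.
rewrite opprD (brA v a) brNr opprK (brA v) opprK addrC. done. Qed.

Lemma sub_neg (I : Q -> Prop) x : submodule I -> I x -> I (- x).
Proof. case=> _ _ H Hx. rewrite -scaleN1r. exact: H. Qed.

Lemma Lneg x : L x -> L (- x). Proof. case: HL => H _. exact: sub_neg. Qed.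
Lemma Lbr x y : L x -> L y -> L (br x y). Proof. by case: HL => _ H; apply: H. Qed.
Lemma Ladd x y : L x -> L y -> L (x + y). Proof. by case: HL => [[_ H _]] _; apply: H. Qed.
Lemma Lscale a x : L x -> L (a *: x). Proof. by case: HL => [[_ _ H]] _; apply: H. Qed.
Lemma L0 : L 0. Proof. by case: HL => [[H _ _]] _. Qed.

Lemma ideal_r (J : Q -> Prop) x y : lie_ideal br L J -> J x -> L y -> J (br x y).
Proof. case=> Hs HJL HJ Jx Ly. rewrite brA. apply: sub_neg => //. exact: HJ. Qed.

Fixpoint M (J : Q -> Prop) (k : nat) (v : Q) : Prop :=
  match k with 0 => L v | k.+1 => forall a, J a -> M J k (br a v) end.

Section MJ.
Variable J : Q -> Prop.
Hypothesis HJ : lie_ideal br L J.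

Lemma M0 k : M J k 0.
Proof. elim: k => [|k IH] /=; first exact: L0. by move=> a _; rewrite br0r. Qed.
Lemma Madd k x y : M J k x -> M J k y -> M J k (x + y).
Proof. elim: k x y => [|k IH] x y /=; first exact: Ladd.
by move=> Hx Hy a Ja; rewrite brDr; apply: IH; [apply: Hx|apply: Hy]. Qed.
Lemma Mscale k c x : M J k x -> M J k (c *: x).
Proof. elim: k x => [|k IH] x /=; first exact: Lscale.
by move=> Hx a Ja; rewrite brZr; apply: IH; apply: Hx. Qed.
Lemma ML k b v : L b -> M J k v -> M J k (br b v).
Proof. elim: k b v => [|k IH] b v /=; first exact: Lbr.
move=> Lb Hv a Ja. rewrite brJ. apply: Madd; first apply: Hv.
  exact: ideal_r.
apply: IH => //. exact: Hv. Qed.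
Lemma Mmono k v : M J k v -> M J k.+1 v.
Proof. move=> Hv a Ja /=. apply: ML => //. by case: HJ => _ H _; apply: H. Qed.
Lemma Mmono_add k m v : M J k v -> M J (k + m) v.
Proof. elim: m => [|m IH]; first by rewrite addn0. by rewrite addnS => /IH /Mmono. Qed.
Lemma Mad y : (forall a, J a -> L (br a y)) -> forall k v, M J k v -> M J k.+1 (br y v).
Proof. move=> Hy; elim=> [|k IH] v /=.
  move=> Lv a Ja. rewrite brJ. apply: Ladd; first exact: Lbr (Hy _ Ja) Lv.
  rewrite brA; apply: Lneg; apply: Hy. case: HJ => _ _ H.
  rewrite brA; apply: sub_neg; first by case: HJ. exact: H.
move=> Hv a Ja. rewrite brJ. apply: (Madd (k:=k.+1)).
  apply: (ML (k:=k.+1)) => //. exact: Hy.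
apply: IH. exact: Hv. Qed.
End MJ.

Definition good (J : Q -> Prop) := lie_ideal br L J /\ trivial_ann br L J.

Lemma good_inter I1 I2 : semiprime br L -> good I1 -> good I2 ->
  good (fun x => I1 x /\ I2 x).
Proof.
move=> Hsp [HI1 T1] [HI2 T2].
have HI : lie_ideal br L (fun x => I1 x /\ I2 x).
  case: HI1 => [[a1 b1 c1] d1 e1]; case: HI2 => [[a2 b2 c2] d2 e2].
  split; first split.
  - by split.
  - by move=> x y [? ?] [? ?]; split; [apply: b1|apply: b2].
  - by move=> a x [? ?]; split; [apply: c1|apply: c2].
  - by move=> x [? _]; apply: d1.
  - by move=> x y Lx [? ?]; split; [apply: e1|apply: e2].
split => // a La Ha.
pose A x := L x /\ forall b, I1 b -> I2 b -> br x b = 0.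
have AL x y : A x -> L y -> A (br y x).
  move=> [Lx Hx] Ly; split; first exact: Lbr.
  move=> b b1 b2. have := brJ y x b. rewrite Hx // br0r => /eqP.
  rewrite eq_sym addr_eq0 => /eqP ->.
  rewrite (Hx (br y b)) ?oppr0 //.
    by case: HI1 => _ _ H; apply: H.
  by case: HI2 => _ _ H; apply: H.
have AL' x y : A x -> L y -> A (br x y).
  move=> Ax Ly; rewrite brA; case: (AL _ _ Ax Ly) => L1 H1; split; first exact: Lneg.
  by move=> b b1 b2; rewrite brNl H1 // oppr0.
pose K x := A x /\ I1 x /\ I2 x.
have KI : lie_ideal br L K.
  case: HI1 => [[a1 b1 c1] d1 e1]; case: HI2 => [[a2 b2 c2] d2 e2].
  split; first split.
  - split; first by split; [exact: L0|move=> b _ _; rewrite br0l].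
    by [].
  - move=> x y [[Lx Ax] [? ?]] [[Ly Ay] [? ?]]; split; last by split; [apply: b1|apply: b2].
    split; first exact: Ladd. by move=> b ? ?; rewrite brDl Ax ?Ay ?addr0.
  - move=> c x [[Lx Ax] [? ?]]; split; last by split; [apply: c1|apply: c2].
    split; first exact: Lscale. by move=> b ? ?; rewrite brZl Ax ?scaler0.
  - by move=> x [[]].
  - move=> x y Lx [Ay [? ?]]; split; first exact: AL.
    by split; [apply: e1|apply: e2].
have K0 x : K x -> x = 0.
  move=> Kx; apply: NNPP => nx.
  have [k [k' [Kk Kk' nz]]] := Hsp K KI (ex_intro _ x (conj Kx nx)).
  case: Kk => [[_ Hk] _]; case: Kk' => _ [? ?]. by apply: nz; apply: Hk.
have HA : A a by split => // b ? ?; apply: Ha.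
apply: T1 => // i1 Hi1. have Li1 : L i1 by case: HI1 => _ H _; apply: H.
apply: T2; first exact: Lbr.
move=> i2 Hi2. have Li2 : L i2 by case: HI2 => _ H _; apply: H.
apply: K0; split; first by apply (AL') => //; apply (AL').
split.
  rewrite brA; apply: sub_neg; first by case: HI1.
  case: HI1 => _ _ H; apply H => //. by apply H.
by case: HI2 => _ _ H; apply: H => //; apply: Lbr.
Qed.

Lemma nonzero J w : algebra_of_quotients br L -> good J -> w <> 0 ->
  exists a, J a /\ br a w <> 0.
Proof.
move=> Hq [HJ TJ] nw. apply: NNPP => Hn.
have Hz a : J a -> br a w = 0.
  move=> Ja; apply: NNPP => nz; apply: Hn; by exists a.
have [I [HI _ [a [Ia nz]] HIL]] := Hq w nw.
apply: nz; apply: TJ; first exact: HIL.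
have La : L a by case: HI => _ H _; apply: H.
move=> b Jb. rewrite brA. have := brJ b a w. rewrite (Hz b Jb) br0r addr0 => ->.
rewrite Hz ?oppr0 //. exact: ideal_r.
Qed.

Lemma key mu : semiprime br L -> algebra_of_quotients br L -> inA br mu ->
  forall J1, good J1 -> exists J0, [/\ good J0, (forall x, J0 x -> J1 x) &
   forall J, lie_ideal br L J -> (forall x, J x -> J0 x) ->
     exists n, forall k v, M J k v -> M J (k + n) (mu v)].
Proof.
move=> Hsp Hq; elim=> [y|f g _ IHf _ IHg|c f _ IHf|f g _ IHf _ IHg] J1 G1.
- case: (classic (y = 0)) => [->|ny].
    exists J1; split => // J HJ _; exists 1%N => k v Hv.
    rewrite addn1 /ad; apply: Mad => //. by move=> a _; rewrite br0r; exact: L0.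
  have [I [HI TI _ HIL]] := Hq y ny.
  exists (fun x => J1 x /\ I x); split.
  + exact: good_inter.
  + by move=> x [].
  + move=> J HJ sJ; exists 1%N => k v Hv. rewrite addn1 /ad; apply: Mad => //.
    by move=> a /sJ [_ /HIL].
- have [J0 [G0 s0 H0]] := IHf J1 G1. have [J2 [G2 s2 H2]] := IHg J0 G0.
  exists J2; split => // [x /s2 /s0 //|J HJ sJ].
  have [nf Hf] := H0 J HJ (fun x Jx => s2 _ (sJ _ Jx)).
  have [ng Hg] := H2 J HJ sJ.
  exists (nf + ng)%N => k v Hv. apply: Madd => //.
    by rewrite addnA; apply: Mmono_add => //; apply: Hf.
  by rewrite (addnC nf) addnA; apply: Mmono_add => //; apply: Hg.
- have [J0 [G0 s0 H0]] := IHf J1 G1. exists J0; split => // J HJ sJ.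
  have [n Hn] := H0 J HJ sJ. exists n => k v Hv. apply: Mscale => //. exact: Hn.
- have [J0 [G0 s0 H0]] := IHf J1 G1. have [J2 [G2 s2 H2]] := IHg J0 G0.
  exists J2; split => // [x /s2 /s0 //|J HJ sJ].
  have [nf Hf] := H0 J HJ (fun x Jx => s2 _ (sJ _ Jx)).
  have [ng Hg] := H2 J HJ sJ.
  exists (ng + nf)%N => k v Hv. rewrite addnA. apply: Hf. exact: Hg.
Qed.

Lemma build J : algebra_of_quotients br L -> good J -> forall m w, w <> 0 ->
  exists x, [/\ inA br x, (forall v, L v -> L (x v)), x w <> 0 &
     forall v, M J m.+1 v -> L (x v)].
Proof.
move=> Hq GJ; elim=> [|m IH] w nw.
  have [a [Ja nz]] := nonzero Hq GJ nw.
  have La : L a by case: GJ => [[_ H _]] _; apply: H.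
  exists (ad br a); split => //; first exact: inA_ad.
    by move=> v Lv; apply: Lbr.
  by move=> v /= Hv; apply: Hv.
have [a [Ja nz]] := nonzero Hq GJ nw.
have La : L a by case: GJ => [[_ H _]] _; apply: H.
have [x [Ax Lx nx Mx]] := IH _ nz.
exists (fun v => x (ad br a v)); split => //.
- apply: inA_comp => //; exact: inA_ad.
- by move=> v Lv; apply: Lx; apply: Lbr.
- move=> v Hv; apply: Mx. exact: Hv.
Qed.

End Proof.

Theorem mainTheorem2 (R : comPzRingType) (Q : lmodType R) (br : Q -> Q -> Q)
  (L : Q -> Prop) :
  is_lie_bracket br -> lie_subalgebra br L -> semiprime br L ->
  algebra_of_quotients br L ->
  left_quotient_algebra (inA br) (inA0 br L).
Proof.
move=> Hbr HL Hsp Hq p q Ap Aq np.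
have [z nz] : exists z, p z <> 0.
  apply: NNPP => H; apply: np; apply: functional_extensionality => z.
  apply: NNPP => nz; apply: H; by exists z.
have [I [HI TI _ _]] := Hq _ nz.
have [J0 [G0 _ H0]] := key Hbr HL Hsp Hq Aq (conj HI TI).
have [n Hn] := H0 J0 G0.1 (fun _ h => h).
have [x [Ax Lx nx Mx]] := build Hbr HL Hq G0 n nz.
exists x; split.
- by split.
- by move=> E; apply: nx; have := congr1 (fun f => f z) E.
- split; first exact: inA_comp.
  move=> v Lv; apply: Mx. apply: Mmono => //; first by case: G0.
  by have := Hn 0%N v Lv.
Qed.
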